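(* If $M$ is a term of $\ell\Lambda_\infty^{4S}$, $M\to_0^* N$ and $M\to_0^* L$, then there is $P$ such that $N\to_0^* P$ and $L\to_0^* P$.
   Context: Preterms: possibly infinite trees generated by $M ::= x \mid MN \mid \lambda x.M \mid \lambda^{\downarrow}x.M \mid \lambda^{\uparrow}x.M \mid \downarrow M \mid \uparrow M$ ($\downarrow M$ inductive box, $\uparrow M$ coinductive box); substitution is capture-avoiding. Patterns: $x,\downarrow x,\uparrow x,\#x,\dagger x$; environments: finite sets of patterns, each variable in at most one; $\Theta,\Xi,\Psi,\Phi$ linear environments with marked versions $\#\Theta$ etc.; $\Upsilon,\Pi$ environments with only patterns $y$, $\downarrow y$; commas are disjoint unions. A term of $\ell\Lambda_\infty^{4S}$ is a preterm $M$ with $\Gamma\vdash M$ derivable for some $\Gamma$ by: (vl) $\#\Theta,\uparrow\Xi,\dagger\Psi,x\vdash x$; (vd) $\#\Theta,\uparrow\Xi,\dagger\Psi,\#x\vdash x$; (va) $\#\Theta,\uparrow\Xi,\dagger\Psi,\dagger x\vdash x$; (a) from $\Upsilon,\#\Theta,\uparrow\Xi,\dagger\Psi\vdash M$ and $\Pi,\#\Theta,\uparrow\Xi,\dagger\Psi\vdash N$ infer $\Upsilon,\Pi,\#\Theta,\uparrow\Xi,\dagger\Psi\vdash MN$; (ll) $\Gamma,x\vdash M$ gives $\Gamma\vdash\lambda x.M$; (li)$_1$ $\Gamma,\#x\vdash M$ gives $\Gamma\vdash\lambda^\downarrow x.M$; (li)$_2$ $\Gamma,\downarrow x\vdash M$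 gives $\Gamma\vdash\lambda^\downarrow x.M$; (lc) $\Gamma,\uparrow x\vdash M$ gives $\Gamma\vdash\lambda^\uparrow x.M$; (mi) from $\Xi,\uparrow\Psi,\dagger\Phi\vdash M$ infer $\#\Theta,\downarrow\Xi,\uparrow\Psi,\dagger\Phi\vdash\downarrow M$; (mc) from $\dagger\Xi,\dagger\Psi\vdash M$ infer $\#\Theta,\uparrow\Xi,\dagger\Psi\vdash\uparrow M$; (mc) coinductive, others inductive (every infinite branch of a derivation contains infinitely many (mc)). Basic reduction: $(\lambda x.M)N\mapsto M[N/x]$, $(\lambda^\downarrow x.M)(\downarrow N)\mapsto M[N/x]$, $(\lambda^\uparrow x.M)(\uparrow N)\mapsto M[N/x]$. $M\to_0 N$ iff $M=C[L]$, $N=C[P]$, $L\mapsto P$, where $C$ is a one-hole context whose hole lies inside no coinductive box $\uparrow(\cdot)$ (it may lie inside inductive boxes); $\to_0^*$ is its reflexive-transitive closure. *)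

(* Defs.v *)
From Stdlib Require Import Arith.

(* Preterms: possibly infinite trees.
   Lam = lambda x, LamD = lambda^down x, LamU = lambda^up x,
   BoxD = inductive box (down M), BoxU = coinductive box (up M). *)
CoInductive term : Type :=
| Var  : nat -> term
| App  : term -> term -> term
| Lam  : term -> term
| LamD : term -> term
| LamU : term -> term
| BoxD : term -> term
| BoxU : term -> term.

CoInductive bisim : term -> term -> Prop :=
| bs_var n : bisim (Var n) (Var n)
| bs_app M M' N N' : bisim M M' -> bisim N N' -> bisim (App M N) (App M' N')
| bs_lam M M' : bisim M M' -> bisim (Lam M) (Lam M')
| bs_lamd M M' : bisim M M' -> bisim (LamD M) (LamD M')
| bs_lamu M M' : bisim M M' -> bisim (LamU M) (LamU M')
| bs_boxd M M' : bisim M M' -> bisim (BoxD M) (BoxD M')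
| bs_boxu M M' : bisim M M' -> bisim (BoxU M) (BoxU M').

CoFixpoint lift (d k : nat) (M : term) : term :=
  match M with
  | Var n => Var (if n <? k then n else n + d)
  | App A B => App (lift d k A) (lift d k B)
  | Lam A => Lam (lift d (S k) A)
  | LamD A => LamD (lift d (S k) A)
  | LamU A => LamU (lift d (S k) A)
  | BoxD A => BoxD (lift d k A)
  | BoxU A => BoxU (lift d k A)
  end.

CoFixpoint subst (k : nat) (N M : term) : term :=
  match M with
  | Var n => if n <? k then Var n
             else if n =? k then lift k 0 N
             else Var (pred n)
  | App A B => App (subst k N A) (subst k N B)
  | Lam A => Lam (subst (S k) N A)
  | LamD A => LamD (subst (S k) N A)
  | LamU A => LamU (subst (S k) N A)
  | BoxD A => BoxD (subst k N A)
  | BoxU A => BoxU (subst k N A)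
  end.

Inductive basic : term -> term -> Prop :=
| b_lam M N P : bisim (subst 0 N M) P -> basic (App (Lam M) N) P
| b_lamd M N P : bisim (subst 0 N M) P -> basic (App (LamD M) (BoxD N)) P
| b_lamu M N P : bisim (subst 0 N M) P -> basic (App (LamU M) (BoxU N)) P.

(* Contextual closure through contexts whose hole is not inside a
   coinductive box (no BoxU case). *)
Inductive step0 : term -> term -> Prop :=
| s_base M N : basic M N -> step0 M N
| s_appl M M' N : step0 M M' -> step0 (App M N) (App M' N)
| s_appr M N N' : step0 N N' -> step0 (App M N) (App M N')
| s_lam M M' : step0 M M' -> step0 (Lam M) (Lam M')
| s_lamd M M' : step0 M M' -> step0 (LamD M) (LamD M')
| s_lamu M M' : step0 M M' -> step0 (LamU M) (LamU M')
| s_boxd M M' : step0 M M' -> step0 (BoxD M) (BoxD M').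

Definition red0 (M N : term) : Prop :=
  exists M' N', bisim M M' /\ step0 M' N' /\ bisim N' N.

Inductive red0s : term -> term -> Prop :=
| r_refl M N : bisim M N -> red0s M N
| r_step M N P : red0 M N -> red0s N P -> red0s M P.

(* Patterns: x (KLin), down x (KDown), up x (KUp), #x (KHash), dagger x (KDag). *)
Inductive kind : Type := KLin | KDown | KUp | KHash | KDag.

(* Environment: the pattern (if any) attached to each de Bruijn variable. *)
Definition env : Type := nat -> option kind.

Definition finite_env (G : env) : Prop := exists n, forall i, n <= i -> G i = None.

Definition ext (k : kind) (G : env) : env :=
  fun n => match n with 0 => Some k | S m => G m end.

(* patterns allowed in #Theta, up Xi, dagger Psi *)
Definition shared (o : option kind) : Prop :=
  match o with
  | None | Some KHash | Some KUp | Some KDag => True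
  | _ => False
  end.

(* #Theta, up Xi, dagger Psi, k x *)
Definition var_env (G : env) (x : nat) (k : kind) : Prop :=
  G x = Some k /\ forall y, y <> x -> shared (G y).

(* G = Upsilon, Pi, #Theta, up Xi, dagger Psi with
   G1 = Upsilon, #Theta, up Xi, dagger Psi and G2 = Pi, #Theta, up Xi, dagger Psi *)
Definition split_env (G G1 G2 : env) : Prop :=
  forall i, match G i with
            | None => G1 i = None /\ G2 i = None
            | Some KLin | Some KDown =>
                (G1 i = G i /\ G2 i = None) \/ (G1 i = None /\ G2 i = G i)
            | Some k => G1 i = Some k /\ G2 i = Some k
            end.

(* rule (mi): conclusion #Theta, down Xi, up Psi, dagger Phi;
   premise Xi, up Psi, dagger Phi *)
Definition mi_ok (G : env) : Prop := forall i, G i <> Some KLin.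
Definition mi_env (G : env) : env :=
  fun i => match G i with
           | Some KDown => Some KLin
           | Some KUp => Some KUp
           | Some KDag => Some KDag
           | _ => None
           end.

(* rule (mc): conclusion #Theta, up Xi, dagger Psi;
   premise dagger Xi, dagger Psi *)
Definition mc_ok (G : env) : Prop := forall i, shared (G i).
Definition mc_env (G : env) : env :=
  fun i => match G i with
           | Some KUp | Some KDag => Some KDag
           | _ => None
           end.

(* Inductive rules; R stands for derivability of (mc) premises. *)
Inductive typ_step (R : env -> term -> Prop) : env -> term -> Prop :=
| t_vl G x : var_env G x KLin -> typ_step R G (Var x)
| t_vd G x : var_env G x KHash -> typ_step R G (Var x)
| t_va G x : var_env G x KDag -> typ_step R G (Var x)
| t_a G G1 G2 M N :
    split_env G G1 G2 -> typ_step R G1 M -> typ_step R G2 N ->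
    typ_step R G (App M N)
| t_ll G M : typ_step R (ext KLin G) M -> typ_step R G (Lam M)
| t_li1 G M : typ_step R (ext KHash G) M -> typ_step R G (LamD M)
| t_li2 G M : typ_step R (ext KDown G) M -> typ_step R G (LamD M)
| t_lc G M : typ_step R (ext KUp G) M -> typ_step R G (LamU M)
| t_mi G M : mi_ok G -> typ_step R (mi_env G) M -> typ_step R G (BoxD M)
| t_mc G M : mc_ok G -> R (mc_env G) M -> typ_step R G (BoxU M).

(* Mixed derivability: coinductive only through (mc), i.e. every infinite
   branch contains infinitely many (mc). *)
CoInductive typ (G : env) (M : term) : Prop :=
| typ_fold : typ_step typ G M -> typ G M.

Definition is_term (M : term) : Prop := exists G, finite_env G /\ typ G M.

(* Main.v *)
Require Import Defs.
From Stdlib Require Import Arith Lia.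

Definition frob (t : term) : term :=
  match t with
  | Var n => Var n | App a b => App a b | Lam a => Lam a | LamD a => LamD a
  | LamU a => LamU a | BoxD a => BoxD a | BoxU a => BoxU a end.
Lemma frob_eq t : t = frob t. Proof. destruct t; reflexivity. Qed.

Lemma lift_var d k n : lift d k (Var n) = Var (if n <? k then n else n + d).
Proof. rewrite (frob_eq (lift _ _ _)); reflexivity. Qed.
Lemma lift_app d k a b : lift d k (App a b) = App (lift d k a) (lift d k b).
Proof. rewrite (frob_eq (lift _ _ _)); reflexivity. Qed.
Lemma lift_lam d k a : lift d k (Lam a) = Lam (lift d (S k) a).
Proof. rewrite (frob_eq (lift _ _ _)); reflexivity. Qed.
Lemma lift_lamd d k a : lift d k (LamD a) = LamD (lift d (S k) a).
Proof. rewrite (frob_eq (lift _ _ _)); reflexivity. Qed.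
Lemma lift_lamu d k a : lift d k (LamU a) = LamU (lift d (S k) a).
Proof. rewrite (frob_eq (lift _ _ _)); reflexivity. Qed.
Lemma lift_boxd d k a : lift d k (BoxD a) = BoxD (lift d k a).
Proof. rewrite (frob_eq (lift _ _ _)); reflexivity. Qed.
Lemma lift_boxu d k a : lift d k (BoxU a) = BoxU (lift d k a).
Proof. rewrite (frob_eq (lift _ _ _)); reflexivity. Qed.
Lemma subst_var k N n : subst k N (Var n) =
  if n <? k then Var n else if n =? k then lift k 0 N else Var (pred n).
Proof. rewrite (frob_eq (subst _ _ _)); simpl; destruct (n <? k), (n =? k); try reflexivity.
  symmetry; apply frob_eq. Qed.
Lemma subst_app k N a b : subst k N (App a b) = App (subst k N a) (subst k N b).
Proof. rewrite (frob_eq (subst _ _ _)); reflexivity. Qed.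
Lemma subst_lam k N a : subst k N (Lam a) = Lam (subst (S k) N a).
Proof. rewrite (frob_eq (subst _ _ _)); reflexivity. Qed.
Lemma subst_lamd k N a : subst k N (LamD a) = LamD (subst (S k) N a).
Proof. rewrite (frob_eq (subst _ _ _)); reflexivity. Qed.
Lemma subst_lamu k N a : subst k N (LamU a) = LamU (subst (S k) N a).
Proof. rewrite (frob_eq (subst _ _ _)); reflexivity. Qed.
Lemma subst_boxd k N a : subst k N (BoxD a) = BoxD (subst k N a).
Proof. rewrite (frob_eq (subst _ _ _)); reflexivity. Qed.
Lemma subst_boxu k N a : subst k N (BoxU a) = BoxU (subst k N a).
Proof. rewrite (frob_eq (subst _ _ _)); reflexivity. Qed.

#[global] Hint Rewrite lift_var lift_app lift_lam lift_lamd lift_lamu lift_boxd lift_boxu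
  subst_var subst_app subst_lam subst_lamd subst_lamu subst_boxd subst_boxu : tm.

Lemma bisim_refl : forall M, bisim M M.
Proof. cofix CH; intros [n|a b|a|a|a|a|a]; constructor; apply CH. Qed.
Lemma bisim_sym : forall M N, bisim M N -> bisim N M.
Proof. cofix CH; intros M N H; destruct H; constructor; apply CH; assumption. Qed.
Lemma bisim_trans : forall M N P, bisim M N -> bisim N P -> bisim M P.
Proof. cofix CH; intros M N P H1 H2; destruct H1; inversion H2; subst; constructor;
  eapply CH; eassumption. Qed.

Lemma lift_bisim : forall d k A A', bisim A A' -> bisim (lift d k A) (lift d k A').
Proof. cofix CH; intros d k A A' H; destruct H; autorewrite with tm; constructor; apply CH; assumption. Qed.

Lemma subst_bisim : forall k A A' B B', bisim A A' -> bisim B B' -> bisim (subst k A B) (subst k A' B').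
Proof. cofix CH; intros k A A' B B' HA H; destruct H; autorewrite with tm;
  try (constructor; apply CH; assumption).
  destruct (n <? k); [constructor|]. destruct (n =? k); [apply lift_bisim; assumption|constructor].
Qed.

Lemma bv x y : x = y -> bisim (Var x) (Var y).
Proof. intros ->; constructor. Qed.

Ltac nat_cases := repeat match goal with
  | |- context[?a <? ?b] => destruct (Nat.ltb_spec a b)
  | |- context[?a =? ?b] => destruct (Nat.eqb_spec a b) end.
Ltac vcase := repeat (autorewrite with tm; nat_cases); try (exfalso; lia); try (apply bv; lia).

Lemma lift_lift : forall A c i k j, j <= i <= j + k ->
  bisim (lift c i (lift k j A)) (lift (c+k) j A).
Proof. cofix CH; intros [n|a b|a|a|a|a|a] c i k j H; autorewrite with tm;
  try (constructor; apply CH; lia); try (constructor; apply CH; lia).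
  vcase.
Qed.

Lemma lift_lift_comm : forall E d i j c' m, j <= c' -> m = i + c' ->
  bisim (lift d m (lift i j E)) (lift i j (lift d c' E)).
Proof. cofix CH; intros [n|a b|a|a|a|a|a] d i j c' m H Hm; autorewrite with tm;
  try (constructor; apply CH; lia).
  subst m; vcase.
Qed.

Lemma subst_lift_cancel : forall A c X d i, i <= c <= i + d ->
  bisim (subst c X (lift (S d) i A)) (lift d i A).
Proof. cofix CH; intros [n|a b|a|a|a|a|a] c X d i H; autorewrite with tm;
  try (constructor; apply CH; lia).
  vcase.
Qed.

Lemma subst_lift_comm : forall E c k i A m, m = c + k -> i <= k ->
  bisim (subst m A (lift c i E)) (lift c i (subst k A E)).
Proof. cofix CH; intros [n|a b|a|a|a|a|a] c k i A m Hm H; autorewrite with tm;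
  try (constructor; apply CH; lia).
  subst m; vcase.
  apply bisim_sym. replace (n+c) with (c+k) by lia. apply lift_lift. lia.
Qed.

Lemma lift_subst : forall D d i c E m, m = i + c ->
  bisim (lift d m (subst i E D)) (subst i (lift d c E) (lift d (S m) D)).
Proof. cofix CH; intros [n|a b|a|a|a|a|a] d i c E m Hm; autorewrite with tm;
  try (constructor; apply CH; lia).
  subst m; vcase.
  apply lift_lift_comm; lia.
Qed.

Lemma subst_subst : forall D c k A E m, m = c + k ->
  bisim (subst m A (subst c E D)) (subst c (subst k A E) (subst (S m) A D)).
Proof. cofix CH; intros [n|a b|a|a|a|a|a] c k A E m Hm; autorewrite with tm;
  try (constructor; apply CH; lia).
  subst m; vcase.
  - apply subst_lift_comm; lia.
  - apply bisim_sym. replace n with (S (c+k)) by lia. apply subst_lift_cancel. lia.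
Qed.

Definition nfS (R : nat -> term -> Prop) (j : nat) (M : term) : Prop :=
  match M with
  | Var n => n <> j
  | App A B => R j A /\ R j B
  | Lam A | LamD A | LamU A => R (S j) A
  | BoxD A | BoxU A => R j A
  end.
Definition nf (j : nat) (M : term) : Prop :=
  exists R : nat -> term -> Prop, (forall j M, R j M -> nfS R j M) /\ R j M.

Lemma nfS_mono (R S : nat -> term -> Prop) : (forall j M, R j M -> S j M) ->
  forall j M, nfS R j M -> nfS S j M.
Proof. intros H j [n|a b|a|a|a|a|a]; simpl; intuition. Qed.
Lemma nf_unfold j M : nf j M -> nfS nf j M.
Proof. intros [R [HR HM]]. eapply nfS_mono; [|apply HR; exact HM].
  intros j' M' H. exists R; auto. Qed.
Lemma nf_coind (R : nat -> term -> Prop) : (forall j M, R j M -> nfS R j M) ->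
  forall j M, R j M -> nf j M.
Proof. intros H j M HM; exists R; auto. Qed.

Lemma nf_bisim j M M' : nf j M -> bisim M M' -> nf j M'.
Proof.
  intros H1 H2. apply (nf_coind (fun j M' => exists M, nf j M /\ bisim M M')); [|eauto].
  clear. intros j M' [M [H1 H2]]. apply nf_unfold in H1. destruct H2; simpl in *; intuition eauto.
Qed.

Ltac splitH := repeat match goal with H : _ /\ _ |- _ => destruct H end.
Ltac ex_solve := repeat match goal with |- _ /\ _ => split | |- ex _ => eexists end; first [reflexivity | eassumption | lia].

Lemma nf_lift_range A d c j : c <= j < c + d -> nf j (lift d c A).
Proof.
  intros H. apply (nf_coind (fun j X => exists A c, X = lift d c A /\ c <= j < c + d)); [|eauto].
  clear. intros j X [A [c [-> H]]]. destruct A as [n|a b|a|a|a|a|a]; autorewrite with tm; simpl;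
  try ex_solve. nat_cases; lia.
Qed.

Lemma nf_lift1 A d c i : i < c -> nf i A -> nf i (lift d c A).
Proof.
  intros H1 H2. apply (nf_coind (fun i X => exists A c, X = lift d c A /\ i < c /\ nf i A)); [|eauto 6].
  clear. intros i X [A [c [-> [H HA]]]]. apply nf_unfold in HA.
  destruct A as [n|a b|a|a|a|a|a]; autorewrite with tm; simpl in *;
  splitH; try ex_solve. nat_cases; lia.
Qed.

Lemma nf_lift2 A d c i : c <= i -> nf i A -> nf (i + d) (lift d c A).
Proof.
  intros H1 H2. apply (nf_coind (fun j X => exists i A c, j = i + d /\ X = lift d c A /\ c <= i /\ nf i A)); [|eauto 8].
  clear. intros j X [i [A [c [-> [-> [H HA]]]]]]. apply nf_unfold in HA.
  destruct A as [n|a b|a|a|a|a|a]; autorewrite with tm; simpl in *;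
  splitH.
  1: nat_cases; lia.
  1: split; ex_solve.
  all: try (exists (S i); ex_solve); try ex_solve.
Qed.

Lemma nf_coind2 (R : nat -> term -> Prop) :
  (forall j M, R j M -> nfS (fun j M => R j M \/ nf j M) j M) ->
  forall j M, R j M -> nf j M.
Proof.
  intros H j M HM. apply (nf_coind (fun j M => R j M \/ nf j M)); [|auto].
  clear j M HM. intros j M [HM|HM]; auto.
  eapply nfS_mono; [|apply nf_unfold; exact HM]. auto.
Qed.

Lemma nfS_nf (R : nat -> term -> Prop) j M : nf j M -> nfS (fun j M => R j M \/ nf j M) j M.
Proof. intros H. eapply nfS_mono; [|apply nf_unfold; exact H]. auto. Qed.

Lemma nf_substA A C j k : j < k -> nf j C -> nf j (subst k A C).
Proof.
  intros H1 H2. apply (nf_coind2 (fun j X => exists C k, X = subst k A C /\ j < k /\ nf j C)); [|eauto 6].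
  clear. intros j X [C [k [-> [H HC]]]]. apply nf_unfold in HC.
  destruct C as [n|a b|a|a|a|a|a]; autorewrite with tm; simpl in *; splitH;
  try (split; left; ex_solve); try (left; ex_solve).
  nat_cases; first [apply nfS_nf; apply nf_lift_range; lia | simpl; lia].
Qed.

Lemma nf_substB A C j k : k <= j -> nf k C -> nf (S j) C -> nf j (subst k A C).
Proof.
  intros H1 H2 H3. apply (nf_coind2 (fun j X => exists C k, X = subst k A C /\ k <= j /\ nf k C /\ nf (S j) C)); [|eauto 8].
  clear. intros j X [C [k [-> [H [HC HC']]]]]. apply nf_unfold in HC. apply nf_unfold in HC'.
  destruct C as [n|a b|a|a|a|a|a]; autorewrite with tm; simpl in *; splitH;
  try (split; left; ex_solve); try (left; ex_solve).
  nat_cases; simpl; lia.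
Qed.

Lemma nf_substB' A C j k : k <= j -> nf (S j) C -> nf (j - k) A -> nf j (subst k A C).
Proof.
  intros H1 H2 H3. apply (nf_coind2 (fun j X => exists C k, X = subst k A C /\ k <= j /\ nf (S j) C /\ nf (j - k) A)); [|eauto 8].
  clear. intros j X [C [k [-> [H [HC HA]]]]]. apply nf_unfold in HC.
  destruct C as [n|a b|a|a|a|a|a]; autorewrite with tm; simpl in *; splitH;
  try (split; left; ex_solve); try (left; ex_solve; simpl; try eassumption; lia).
  nat_cases; first [simpl; lia | apply nfS_nf; replace j with (j - k + k) by lia;
  apply nf_lift2; [lia|assumption]].
Qed.

Lemma nf_indep : forall C k A A', nf k C -> bisim (subst k A C) (subst k A' C).
Proof.
  cofix CH. intros C k A A' H. apply nf_unfold in H.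
  destruct C as [n|a b|a|a|a|a|a]; autorewrite with tm; simpl in *; splitH;
  try (constructor; apply CH; assumption).
  nat_cases; try lia; constructor.
Qed.

Inductive nu : nat -> term -> Prop :=
| nu_var j n : nu j (Var n)
| nu_app j A B : nu j A -> nu j B -> nu j (App A B)
| nu_lam j A : nu (S j) A -> nu j (Lam A)
| nu_lamd j A : nu (S j) A -> nu j (LamD A)
| nu_lamu j A : nu (S j) A -> nu j (LamU A)
| nu_boxd j A : nu j A -> nu j (BoxD A)
| nu_boxu j A : nf j A -> nu j (BoxU A).
#[global] Hint Constructors nu : core.

Inductive GS (R : term -> Prop) : term -> Prop :=
| gs_var n : GS R (Var n)
| gs_app A B : GS R A -> GS R B -> GS R (App A B)
| gs_lam A : GS R A -> nu 0 A -> GS R (Lam A)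
| gs_lamd A : GS R A -> nu 0 A -> GS R (LamD A)
| gs_lamu A : GS R A -> GS R (LamU A)
| gs_boxd A : GS R A -> GS R (BoxD A)
| gs_boxu A : R A -> GS R (BoxU A).
#[global] Hint Constructors GS : core.

Lemma nu_bisim j M M' : nu j M -> bisim M M' -> nu j M'.
Proof. intros H; revert M'; induction H; intros M' E; inversion E; subst; eauto.
  constructor. eapply nf_bisim; eauto. Qed.

Lemma nu_lift1 A d c i : i < c -> nu i A -> nu i (lift d c A).
Proof. intros H1 H2; revert c H1; induction H2; intros c Hc; autorewrite with tm; eauto using nf_lift1 with arith. Qed.

Lemma nu_lift2 A d c i : c <= i -> nu i A -> nu (i + d) (lift d c A).
Proof. intros H1 H2; revert c H1; induction H2; intros c Hc; autorewrite with tm;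
  try (constructor; apply IHnu; lia); eauto using nf_lift2. Qed.

Lemma nu_lift_range R A d c j : GS R A -> c <= j < c + d -> nu j (lift d c A).
Proof. intros H; revert c j; induction H; intros c j Hc; autorewrite with tm;
  try (constructor; apply IHGS; lia); eauto.
  constructor; apply nf_lift_range; lia. Qed.

Lemma nf_nu R A i : GS R A -> nf i A -> nu i A.
Proof. intros H; revert i; induction H; intros i Hi; apply nf_unfold in Hi; simpl in Hi; splitH; eauto. Qed.

Lemma nu_substA R A B j k : j < k -> nu j B -> GS R A -> nu j (subst k A B).
Proof. intros H1 H2 HA; revert k H1; induction H2; intros k Hk; autorewrite with tm;
  try (constructor; apply IHnu; lia); eauto.
  - nat_cases; eauto. eapply nu_lift_range; eauto; lia.
  - constructor; apply nf_substA; auto.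
Qed.

Lemma nu_substB A B j k : k <= j -> nu (S j) B -> nu (j - k) A -> nu k B -> nu j (subst k A B).
Proof. intros H1 H2 HA H3. remember (S j) as sj eqn:E. revert j k E H1 HA H3.
  induction H2; intros j' k E Hk HA H3; subst; inversion H3; subst; autorewrite with tm.
  - nat_cases; eauto. replace j' with (j' - k + k) by lia. apply nu_lift2; [lia|assumption].
  - constructor; eauto.
  - constructor; eapply IHnu; eauto; lia.
  - constructor; eapply IHnu; eauto; lia.
  - constructor; eapply IHnu; eauto; lia.
  - constructor; eauto.
  - constructor; apply nf_substB; auto.
Qed.

Lemma nu_substB' R A B j k : k <= j -> nu (S j) B -> nf (j - k) A -> GS R A -> nu j (subst k A B).
Proof. intros H1 H2 HA HG. remember (S j) as sj eqn:E. revert j k E H1 HA.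
  induction H2; intros j' k E Hk HA; subst; autorewrite with tm.
  - nat_cases; eauto. replace j' with (j' - k + k) by lia. apply nu_lift2; [lia|]. eapply nf_nu; eauto.
  - constructor; eauto.
  - constructor; eapply IHnu; eauto; lia.
  - constructor; eapply IHnu; eauto; lia.
  - constructor; eapply IHnu; eauto; lia.
  - constructor; eauto.
  - constructor; apply nf_substB'; auto.
Qed.

Definition Good (M : term) : Prop := exists R : term -> Prop, (forall X, R X -> GS R X) /\ R M.

Lemma GS_mono (R S : term -> Prop) : (forall X, R X -> S X) -> forall M, GS R M -> GS S M.
Proof. intros H M HM; induction HM; auto. Qed.

Lemma Good_unfold M : Good M -> GS Good M.
Proof. intros [R [HR HM]]. eapply GS_mono; [|apply HR; exact HM]. intros X HX; exists R; auto. Qed.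

Lemma Good_fold M : GS Good M -> Good M.
Proof. intros H. exists (GS Good). split; auto. intros X HX. eapply GS_mono; [|exact HX]. apply Good_unfold. Qed.

Lemma Good_coind2 (R : term -> Prop) : (forall X, R X -> GS (fun X => R X \/ Good X) X) -> forall M, R M -> Good M.
Proof. intros H M HM. exists (fun X => R X \/ Good X). split; auto.
  intros X [HX|HX]; auto. eapply GS_mono; [|apply Good_unfold; exact HX]. auto. Qed.

Lemma GS_Good_or (R : term -> Prop) M : Good M -> GS (fun X => R X \/ Good X) M.
Proof. intros H; eapply GS_mono; [|apply Good_unfold; exact H]; auto. Qed.

Lemma Good_bisim M M' : Good M -> bisim M M' -> Good M'.
Proof.
  intros H1 H2. apply (Good_coind2 (fun X => exists Y, Good Y /\ bisim Y X)); [|eauto].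
  clear. intros X [Y [HY E]]. apply Good_unfold in HY. revert X E.
  induction HY; intros X E; inversion E; subst; eauto using nu_bisim.
Qed.

Lemma Good_lift A d c : Good A -> Good (lift d c A).
Proof.
  intros H. apply (Good_coind2 (fun X => exists A c, X = lift d c A /\ Good A)); [|eauto].
  clear. intros X [A [c [-> HA]]]. apply Good_unfold in HA. revert c.
  induction HA; intros c; autorewrite with tm; eauto.
  - constructor; eauto. apply nu_lift1; auto; lia.
  - constructor; eauto. apply nu_lift1; auto; lia.
  - constructor; left; eauto.
Qed.

Lemma Good_subst A B k : Good A -> Good B -> Good (subst k A B).
Proof.
  intros H1 H2. apply (Good_coind2 (fun X => exists B k, X = subst k A B /\ Good B)); [|eauto].
  clear H2. clear k. intros X [B0 [k [-> HB]]]. apply Good_unfold in HB. revert k.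
  induction HB; intros k; autorewrite with tm; eauto.
  - nat_cases; auto. apply GS_Good_or, Good_lift, H1.
  - constructor; eauto. eapply nu_substA; eauto; [lia|apply Good_unfold, H1].
  - constructor; eauto. eapply nu_substA; eauto; [lia|apply Good_unfold, H1].
  - constructor. left. eauto.
Qed.

Lemma Good_app A B : Good (App A B) -> Good A /\ Good B.
Proof. intros H; apply Good_unfold in H; inversion H; subst; split; apply Good_fold; auto. Qed.
Lemma Good_lam A : Good (Lam A) -> Good A /\ nu 0 A.
Proof. intros H; apply Good_unfold in H; inversion H; subst; split; try apply Good_fold; auto. Qed.
Lemma Good_lamd A : Good (LamD A) -> Good A /\ nu 0 A.
Proof. intros H; apply Good_unfold in H; inversion H; subst; split; try apply Good_fold; auto. Qed.
Lemma Good_lamu A : Good (LamU A) -> Good A.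
Proof. intros H; apply Good_unfold in H; inversion H; subst; apply Good_fold; auto. Qed.
Lemma Good_boxd A : Good (BoxD A) -> Good A.
Proof. intros H; apply Good_unfold in H; inversion H; subst; apply Good_fold; auto. Qed.
Lemma Good_boxu A : Good (BoxU A) -> Good A.
Proof. intros H; apply Good_unfold in H; inversion H; subst; auto. Qed.

Inductive par : term -> term -> Prop :=
| p_var n : par (Var n) (Var n)
| p_app A A' B B' : par A A' -> par B B' -> par (App A B) (App A' B')
| p_lam A A' : par A A' -> par (Lam A) (Lam A')
| p_lamd A A' : par A A' -> par (LamD A) (LamD A')
| p_lamu A A' : par A A' -> par (LamU A) (LamU A')
| p_boxd A A' : par A A' -> par (BoxD A) (BoxD A')
| p_boxu A A' : bisim A A' -> par (BoxU A) (BoxU A')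
| p_beta D D' E E' P : par D D' -> par E E' -> bisim (subst 0 E' D') P -> par (App (Lam D) E) P
| p_betad D D' E E' P : par D D' -> par E E' -> bisim (subst 0 E' D') P -> par (App (LamD D) (BoxD E)) P
| p_betau D D' E E' P : par D D' -> bisim E E' -> bisim (subst 0 E' D') P -> par (App (LamU D) (BoxU E)) P.
#[global] Hint Constructors par : core.

Lemma par_bisim_r M N N' : par M N -> bisim N N' -> par M N'.
Proof. intros H; revert N'; induction H; intros N0 E0; try (inversion E0; subst; eauto using bisim_trans; fail);
  eauto using bisim_trans. Qed.

Lemma par_bisim_l M0 M N : bisim M0 M -> par M N -> par M0 N.
Proof. intros E H; revert M0 E; induction H; intros M0 E0; inversion E0; subst; eauto using bisim_trans, bisim_sym.
  - match goal with H : bisim _ (Lam _) |- _ => inversion H; subst end; eauto.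
  - match goal with H : bisim _ (LamD _) |- _ => inversion H; subst end;
    match goal with H : bisim _ (BoxD _) |- _ => inversion H; subst end; eauto.
  - match goal with H : bisim _ (LamU _) |- _ => inversion H; subst end;
    match goal with H : bisim _ (BoxU _) |- _ => inversion H; subst end; eauto using bisim_trans.
Qed.

Lemma par_refl R M : GS R M -> par M M.
Proof. intros H; induction H; auto using bisim_refl. Qed.

Lemma lift_subst0 d c E D : bisim (lift d c (subst 0 E D)) (subst 0 (lift d c E) (lift d (S c) D)).
Proof. apply (lift_subst D d 0 c E c); reflexivity. Qed.

Lemma par_lift A A' d c : par A A' -> par (lift d c A) (lift d c A').
Proof. intros H; revert c; induction H; intros c; autorewrite with tm; eauto using lift_bisim.
  - eapply p_beta; eauto. eapply bisim_trans; [apply bisim_sym, lift_subst0|]. apply lift_bisim; auto.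
  - eapply p_betad; eauto. eapply bisim_trans; [apply bisim_sym, lift_subst0|]. apply lift_bisim; auto.
  - eapply p_betau; eauto using lift_bisim. eapply bisim_trans; [apply bisim_sym, lift_subst0|]. apply lift_bisim; auto.
Qed.

Lemma subst_subst0 k A E D : bisim (subst k A (subst 0 E D)) (subst 0 (subst k A E) (subst (S k) A D)).
Proof. apply (subst_subst D 0 k A E k); reflexivity. Qed.

Ltac inv_nu := repeat match goal with H : nu _ (?c _) |- _ => inversion H; subst; clear H
                                    | H : nu _ (?c _ _) |- _ => inversion H; subst; clear H end.

Lemma subst_par A A' (HA : Good A) : forall B B', par B B' -> forall k,
  (bisim A A' \/ (par A A' /\ nu k B)) -> par (subst k A B) (subst k A' B').
Proof.
  intros B B' H; induction H; intros k Hc;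
  (destruct Hc as [Hb|[Hp Hn]]; [|inv_nu]); autorewrite with tm;
  let sd := (first [left; assumption | right; split; assumption]) in
  try (constructor; (apply IHpar || apply IHpar1 || apply IHpar2); sd; fail).
  - nat_cases; auto. eapply par_bisim_r; [eapply par_refl, Good_unfold, Good_lift, HA|]. apply lift_bisim; auto.
  - nat_cases; auto. apply par_lift; auto.
  - constructor; apply subst_bisim; auto.
  - constructor. eapply bisim_trans; [apply subst_bisim; [apply bisim_refl|eassumption]|].
    apply nf_indep. eapply nf_bisim; eauto.
  - eapply p_beta; [apply IHpar1; left; assumption|apply IHpar2; left; assumption|].
    eapply bisim_sym, bisim_trans; [apply subst_bisim; [apply bisim_refl|apply bisim_sym; eassumption]|apply subst_subst0].
  - eapply p_beta; [apply IHpar1; right; split; assumption|apply IHpar2; right; split; assumption|].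
    eapply bisim_sym, bisim_trans; [apply subst_bisim; [apply bisim_refl|apply bisim_sym; eassumption]|apply subst_subst0].
  - eapply p_betad; [apply IHpar1; left; assumption|apply IHpar2; left; assumption|].
    eapply bisim_sym, bisim_trans; [apply subst_bisim; [apply bisim_refl|apply bisim_sym; eassumption]|apply subst_subst0].
  - eapply p_betad; [apply IHpar1; right; split; assumption|apply IHpar2; right; split; assumption|].
    eapply bisim_sym, bisim_trans; [apply subst_bisim; [apply bisim_refl|apply bisim_sym; eassumption]|apply subst_subst0].
  - eapply p_betau; [apply IHpar; left; assumption|apply subst_bisim; eassumption|].
    eapply bisim_sym, bisim_trans; [apply subst_bisim; [apply bisim_refl|apply bisim_sym; eassumption]|apply subst_subst0].
  - eapply p_betau; [apply IHpar; right; split; assumption| |].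
    + eapply bisim_trans; [apply subst_bisim; [apply bisim_refl|eassumption]|].
      apply nf_indep. eapply nf_bisim; eauto.
    + eapply bisim_sym, bisim_trans; [apply subst_bisim; [apply bisim_refl|apply bisim_sym; eassumption]|apply subst_subst0].
Qed.

Lemma nu_par M N : par M N -> Good M -> forall j, nu j M -> nu j N.
Proof.
  intros H; induction H; intros HG j Hn; inv_nu; eauto.
  - apply Good_app in HG as [? ?]; eauto.
  - apply Good_lam in HG as [? ?]; eauto.
  - apply Good_lamd in HG as [? ?]; eauto.
  - apply Good_lamu in HG; eauto.
  - apply Good_boxd in HG; eauto.
  - constructor; eapply nf_bisim; eauto.
  - apply Good_app in HG as [HG1 HG2]. apply Good_lam in HG1 as [HG1 Hz].
    eapply nu_bisim; [|eassumption]. apply nu_substB; try lia; eauto.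
    rewrite Nat.sub_0_r; eauto.
  - apply Good_app in HG as [HG1 HG2]. apply Good_lamd in HG1 as [HG1 Hz]. apply Good_boxd in HG2.
    eapply nu_bisim; [|eassumption]. apply nu_substB; try lia; eauto.
    rewrite Nat.sub_0_r; eauto.
  - apply Good_app in HG as [HG1 HG2]. apply Good_lamu in HG1. apply Good_boxu in HG2.
    eapply nu_bisim; [|eassumption]. eapply nu_substB'; try lia; eauto.
    + rewrite Nat.sub_0_r; eapply nf_bisim; eauto.
    + apply Good_unfold. eapply Good_bisim; eauto.
Qed.

Lemma Good_par M N : par M N -> Good M -> Good N.
Proof.
  intros H; induction H; intros HG; auto.
  - apply Good_app in HG as [? ?]. apply Good_fold; constructor; apply Good_unfold; auto.
  - pose proof HG as HG'. apply Good_lam in HG as [? ?]. apply Good_fold; constructor; [apply Good_unfold; auto|].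
    eapply nu_par; eauto.
  - pose proof HG as HG'. apply Good_lamd in HG as [? ?]. apply Good_fold; constructor; [apply Good_unfold; auto|].
    eapply nu_par; eauto.
  - apply Good_lamu in HG. apply Good_fold; constructor; apply Good_unfold; auto.
  - apply Good_boxd in HG. apply Good_fold; constructor; apply Good_unfold; auto.
  - apply Good_boxu in HG. apply Good_fold; constructor. eapply Good_bisim; eauto.
  - apply Good_app in HG as [HG1 HG2]. apply Good_lam in HG1 as [HG1 _].
    eapply Good_bisim; [|eassumption]. apply Good_subst; auto.
  - apply Good_app in HG as [HG1 HG2]. apply Good_lamd in HG1 as [HG1 _]. apply Good_boxd in HG2.
    eapply Good_bisim; [|eassumption]. apply Good_subst; auto.
  - apply Good_app in HG as [HG1 HG2]. apply Good_lamu in HG1. apply Good_boxu in HG2.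
    eapply Good_bisim; [|eassumption]. apply Good_subst; auto. eapply Good_bisim; eauto.
Qed.

Lemma beta_join D2 D3 E2 E3 P : Good E2 -> par D2 D3 ->
  (bisim E2 E3 \/ (par E2 E3 /\ nu 0 D2)) -> bisim (subst 0 E2 D2) P -> par P (subst 0 E3 D3).
Proof. intros HG Hd Hc Hb. eapply par_bisim_l; [apply bisim_sym; exact Hb|]. apply subst_par; auto. Qed.

Lemma inv_lam D X : par (Lam D) X -> exists D', X = Lam D' /\ par D D'.
Proof. intros H; inversion H; subst; eauto. Qed.
Lemma inv_lamd D X : par (LamD D) X -> exists D', X = LamD D' /\ par D D'.
Proof. intros H; inversion H; subst; eauto. Qed.
Lemma inv_lamu D X : par (LamU D) X -> exists D', X = LamU D' /\ par D D'.
Proof. intros H; inversion H; subst; eauto. Qed.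
Lemma inv_boxd D X : par (BoxD D) X -> exists D', X = BoxD D' /\ par D D'.
Proof. intros H; inversion H; subst; eauto. Qed.
Lemma inv_boxu D X : par (BoxU D) X -> exists D', X = BoxU D' /\ bisim D D'.
Proof. intros H; inversion H; subst; eauto. Qed.

Ltac bj E3 := eapply (beta_join _ _ _ E3); cycle 3; [eassumption|
  first [eapply Good_par; [eassumption|]; assumption | eapply Good_bisim; [|eassumption]; assumption] | eassumption |
  first [right; split; [eassumption| eapply nu_par; eassumption] | left; apply bisim_sym; eassumption]].

Lemma diamond M N1 : par M N1 -> forall N2, Good M -> par M N2 -> exists N3, par N1 N3 /\ par N2 N3.
Proof.
  intros H1; induction H1; intros N2 HG H2; inversion H2; subst.
  - exists (Var n); auto.
  - apply Good_app in HG as [HG1 HG2].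
    destruct (IHpar1 _ HG1 H1) as [X [? ?]]. destruct (IHpar2 _ HG2 H4) as [Y [? ?]].
    exists (App X Y); auto.
  -
    apply Good_app in HG as [HG1 HG2]. pose proof HG1 as HL. apply Good_lam in HL as [HGD HnD].
    destruct (IHpar1 (Lam D') HG1 (p_lam _ _ H1)) as [X [HX1 HX2]].
    destruct (IHpar2 E' HG2 H3) as [E3 [HE1 HE2]].
    apply inv_lam in H1_ as [D1 [-> HD1]]. apply inv_lam in HX1 as [D3 [-> HD3]].
    apply inv_lam in HX2 as [D3' [[= <-] HD3']].
    exists (subst 0 E3 D3). split.
    + eapply p_beta; eauto using bisim_refl.
    + bj E3.
  - apply Good_app in HG as [HG1 HG2]. pose proof HG1 as HL. apply Good_lamd in HL as [HGD HnD].
    pose proof HG2 as HE. apply Good_boxd in HE.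
    destruct (IHpar1 (LamD D') HG1 (p_lamd _ _ H1)) as [X [HX1 HX2]].
    destruct (IHpar2 (BoxD E') HG2 (p_boxd _ _ H3)) as [Y [HY1 HY2]].
    apply inv_lamd in H1_ as [D1 [-> HD1]]. apply inv_lamd in HX1 as [D3 [-> HD3]].
    apply inv_lamd in HX2 as [D3' [[= <-] HD3']].
    apply inv_boxd in H1_0 as [E1 [-> HE1]]. apply inv_boxd in HY1 as [E3 [-> HE3]].
    apply inv_boxd in HY2 as [E3' [[= <-] HE3']].
    exists (subst 0 E3 D3). split.
    + eapply p_betad; eauto using bisim_refl.
    + bj E3.
  - apply Good_app in HG as [HG1 HG2]. pose proof HG1 as HL. apply Good_lamu in HL.
    pose proof HG2 as HE. apply Good_boxu in HE.
    destruct (IHpar1 (LamU D') HG1 (p_lamu _ _ H1)) as [X [HX1 HX2]].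
    apply inv_lamu in H1_ as [D1 [-> HD1]]. apply inv_lamu in HX1 as [D3 [-> HD3]].
    apply inv_lamu in HX2 as [D3' [[= <-] HD3']].
    apply inv_boxu in H1_0 as [E1 [-> HE1]].
    exists (subst 0 E D3). split.
    + eapply p_betau with (E' := E); [eassumption | apply bisim_sym; eassumption | apply bisim_refl].
    + bj E.
  - apply Good_lam in HG as [HG1 _]. destruct (IHpar _ HG1 H0) as [X [? ?]]. exists (Lam X); auto.
  - apply Good_lamd in HG as [HG1 _]. destruct (IHpar _ HG1 H0) as [X [? ?]]. exists (LamD X); auto.
  - apply Good_lamu in HG. destruct (IHpar _ HG H0) as [X [? ?]]. exists (LamU X); auto.
  - apply Good_boxd in HG. destruct (IHpar _ HG H0) as [X [? ?]]. exists (BoxD X); auto.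
  - exists (BoxU A). split; constructor; apply bisim_sym; auto.

  -
    apply Good_app in HG as [HG1 HG2]. apply Good_lam in HG1 as [HGD HnD].
    apply inv_lam in H3 as [D2 [-> H0]].
    destruct (IHpar1 _ HGD H0) as [D3 [HD1 HD2]].
    destruct (IHpar2 _ HG2 H5) as [E3 [HE1 HE2]].
    exists (subst 0 E3 D3). split.
    + bj E3.
    + eapply p_beta; eauto using bisim_refl.
  - apply Good_app in HG as [HG1 HG2]. apply Good_lam in HG1 as [HGD HnD].
    destruct (IHpar1 _ HGD H3) as [D3 [HD1 HD2]].
    destruct (IHpar2 _ HG2 H4) as [E3 [HE1 HE2]].
    exists (subst 0 E3 D3). split.
    + bj E3.
    + bj E3.
  - apply Good_app in HG as [HG1 HG2]. apply Good_lamd in HG1 as [HGD HnD]. apply Good_boxd in HG2.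
    apply inv_lamd in H3 as [D2 [-> H0]]. apply inv_boxd in H5 as [E2 [-> H4]].
    destruct (IHpar1 _ HGD H0) as [D3 [HD1 HD2]].
    destruct (IHpar2 _ HG2 H4) as [E3 [HE1 HE2]].
    exists (subst 0 E3 D3). split.
    + bj E3.
    + eapply p_betad; eauto using bisim_refl.
  - apply Good_app in HG as [HG1 HG2]. apply Good_lamd in HG1 as [HGD HnD]. apply Good_boxd in HG2.
    destruct (IHpar1 _ HGD H3) as [D3 [HD1 HD2]].
    destruct (IHpar2 _ HG2 H4) as [E3 [HE1 HE2]].
    exists (subst 0 E3 D3). split.
    + bj E3.
    + bj E3.
  - apply Good_app in HG as [HG1 HG2]. apply Good_lamu in HG1 as HGD. apply Good_boxu in HG2.
    apply inv_lamu in H5 as [D2 [-> H4]]. apply inv_boxu in H7 as [E2 [-> H6]].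
    destruct (IHpar _ HGD H4) as [D3 [HD1 HD2]].
    exists (subst 0 E D3). split.
    + bj E.
    + eapply p_betau with (E' := E); [eassumption | apply bisim_sym; eassumption | apply bisim_refl].
  - apply Good_app in HG as [HG1 HG2]. apply Good_lamu in HG1 as HGD. apply Good_boxu in HG2.
    destruct (IHpar _ HGD H5) as [D3 [HD1 HD2]].
    exists (subst 0 E D3). split.
    + bj E.
    + bj E.
Qed.

Inductive pars : term -> term -> Prop :=
| ps_refl M N : bisim M N -> pars M N
| ps_step M N P : par M N -> pars N P -> pars M P.

Lemma pars_bisim_l M0 M N : bisim M0 M -> pars M N -> pars M0 N.
Proof. intros E H; destruct H.
  - apply ps_refl; eapply bisim_trans; eauto.
  - eapply ps_step; [eapply par_bisim_l; eauto|]; auto. Qed.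

Lemma strip M N1 N2 : Good M -> par M N1 -> pars M N2 -> exists N3, pars N1 N3 /\ par N2 N3.
Proof.
  intros HG H1 H2; revert N1 HG H1; induction H2; intros N1 HG H1.
  - exists N1; split; [apply ps_refl, bisim_refl|]. eapply par_bisim_l; [apply bisim_sym; eauto|eauto].
  - destruct (diamond _ _ H1 _ HG H) as [Y [HY1 HY2]].
    destruct (IHpars Y (Good_par _ _ H HG) HY2) as [Z [HZ1 HZ2]].
    exists Z; split; auto. eapply ps_step; eauto.
Qed.

Lemma conf M N L : Good M -> pars M N -> pars M L -> exists P, pars N P /\ pars L P.
Proof.
  intros HG H1; revert L HG; induction H1; intros L HG H2.
  - exists L; split; [eapply pars_bisim_l; [apply bisim_sym; eauto|eauto]| apply ps_refl, bisim_refl].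
  - destruct (strip _ _ _ HG H H2) as [Y [HY1 HY2]].
    destruct (IHpars Y (Good_par _ _ H HG) HY1) as [P0 [HP1 HP2]].
    exists P0; split; auto. eapply ps_step; eauto.
Qed.

Lemma step_par M N : step0 M N -> forall R, GS R M -> par M N.
Proof.
  intros H; induction H; intros R HG.
  - destruct H.
    + inversion HG; subst. match goal with H : GS _ (Lam _) |- _ => inversion H; subst end.
      eapply p_beta; eauto using par_refl.
    + inversion HG; subst. match goal with H : GS _ (LamD _) |- _ => inversion H; subst end.
      match goal with H : GS _ (BoxD _) |- _ => inversion H; subst end.
      eapply p_betad; eauto using par_refl.
    + inversion HG; subst. match goal with H : GS _ (LamU _) |- _ => inversion H; subst end.
      eapply p_betau; eauto using par_refl, bisim_refl.
  - inversion HG; subst; eauto using par_refl.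
  - inversion HG; subst; eauto using par_refl.
  - inversion HG; subst; eauto using par_refl.
  - inversion HG; subst; eauto using par_refl.
  - inversion HG; subst; eauto using par_refl.
  - inversion HG; subst; eauto using par_refl.
Qed.

Lemma red0_par M N : Good M -> red0 M N -> par M N.
Proof.
  intros HG [M' [N' [E1 [H E2]]]].
  eapply par_bisim_l; [exact E1|]. eapply par_bisim_r; [|exact E2].
  eapply step_par; [exact H|]. apply Good_unfold. eapply Good_bisim; eauto.
Qed.

Lemma red0s_pars M N : Good M -> red0s M N -> pars M N.
Proof. intros HG H; induction H. - apply ps_refl; auto.
  - pose proof (red0_par _ _ HG H). eapply ps_step; eauto. apply IHred0s. eapply Good_par; eauto. Qed.

Lemma red0s_trans M N P : red0s M N -> red0s N P -> red0s M P.
Proof. intros H; induction H; intros H2.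
  - destruct H2 as [X Y E|X Y Z R Rs]. + apply r_refl; eapply bisim_trans; eauto.
    + apply r_step with Y; auto. destruct R as [X1 [Y1 [E1 [S E2]]]].
      exists X1, Y1; split; [eapply bisim_trans; eauto|split; auto].
  - eapply r_step; eauto. Qed.

Lemma red0s_one M N : red0 M N -> red0s M N.
Proof. intros H; eapply r_step; eauto. apply r_refl, bisim_refl. Qed.

#[local] Hint Constructors step0 : core.
Lemma red0s_cong (f : term -> term)
  (Hb : forall A A', bisim A A' -> bisim (f A) (f A'))
  (Hs : forall A A', step0 A A' -> step0 (f A) (f A')) :
  forall M N, red0s M N -> red0s (f M) (f N).
Proof. intros M N H; induction H.
  - apply r_refl; auto.
  - eapply r_step; eauto. destruct H as [X [Y [E1 [S E2]]]]. exists (f X), (f Y); auto. Qed.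

Lemma par_red0s M N : par M N -> red0s M N.
Proof.
  intros H; induction H.
  - apply r_refl, bisim_refl.
  - eapply red0s_trans.
    + apply (red0s_cong (fun X => App X B)); [intros; constructor; auto using bisim_refl|intros; eauto 7 using step0|eauto].
    + apply (red0s_cong (fun X => App A' X)); [intros; constructor; auto using bisim_refl|intros; eauto 7 using step0|eauto].
  - apply (red0s_cong Lam); [intros; constructor; auto using bisim_refl|intros; eauto 7 using step0|eauto].
  - apply (red0s_cong LamD); [intros; constructor; auto using bisim_refl|intros; eauto 7 using step0|eauto].
  - apply (red0s_cong LamU); [intros; constructor; auto using bisim_refl|intros; eauto 7 using step0|eauto].
  - apply (red0s_cong BoxD); [intros; constructor; auto using bisim_refl|intros; eauto 7 using step0|eauto].
  - apply r_refl; constructor; auto.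
  - eapply red0s_trans.
    + apply (red0s_cong (fun X => App (Lam X) E)); [intros; repeat constructor; auto using bisim_refl|intros; eauto 7 using step0|eauto].
    + eapply red0s_trans.
      * apply (red0s_cong (fun X => App (Lam D') X)); [intros; repeat constructor; auto using bisim_refl|intros; eauto 7 using step0|eauto].
      * apply red0s_one. exists (App (Lam D') E'), P; split; [apply bisim_refl|split; [|apply bisim_refl]].
        constructor; constructor; auto.
  - eapply red0s_trans.
    + apply (red0s_cong (fun X => App (LamD X) (BoxD E))); [intros; repeat constructor; auto using bisim_refl|intros; eauto 7 using step0|eauto].
    + eapply red0s_trans.
      * apply (red0s_cong (fun X => App (LamD D') (BoxD X))); [intros; repeat constructor; auto using bisim_refl|intros; eauto 7 using step0|eauto].
      * apply red0s_one. exists (App (LamD D') (BoxD E')), P; split; [apply bisim_refl|split; [|apply bisim_refl]].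
        constructor; constructor; auto.
  - eapply red0s_trans.
    + apply (red0s_cong (fun X => App (LamU X) (BoxU E))); [intros; repeat constructor; auto using bisim_refl|intros; eauto 7 using step0|eauto].
    + apply red0s_one. exists (App (LamU D') (BoxU E)), P; split; [apply bisim_refl|split; [|apply bisim_refl]].
      constructor; constructor. eapply bisim_trans; [|eassumption]. apply subst_bisim; auto using bisim_refl.
Qed.

Lemma pars_red0s M N : pars M N -> red0s M N.
Proof. intros H; induction H. - apply r_refl; auto. - eapply red0s_trans; eauto using par_red0s. Qed.

Lemma nf_typ H M x : typ H M -> H x = None -> nf x M.
Proof.
  intros HT Hx. apply (nf_coind (fun x M => exists H, typ H M /\ H x = None)); [|eauto].
  clear. intros x M [E [[HT] Hx]]. destruct HT; simpl.
  - destruct H as [Hy _]. intros ->; congruence.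
  - destruct H as [Hy _]. intros ->; congruence.
  - destruct H as [Hy _]. intros ->; congruence.
  - specialize (H x). rewrite Hx in H. destruct H. split; [exists G1|exists G2]; (split; [constructor; auto|auto]).
  - eexists; split; [constructor; eauto|]. simpl; auto.
  - eexists; split; [constructor; eauto|]. simpl; auto.
  - eexists; split; [constructor; eauto|]. simpl; auto.
  - eexists; split; [constructor; eauto|]. simpl; auto.
  - eexists; split; [constructor; eauto|]. unfold mi_env; rewrite Hx; auto.
  - eexists; split; [eauto|]. unfold mc_env; rewrite Hx; auto.
Qed.

Definition okx (o : option kind) : Prop :=
  match o with None | Some KLin | Some KDown | Some KHash => True | _ => False end.

Lemma nu_typ E M : typ_step typ E M -> forall x, okx (E x) -> nu x M.
Proof.
  intros HT; induction HT; intros y Hy; auto.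
  - pose proof (H y) as Hs. constructor; [apply IHHT1|apply IHHT2];
    destruct (G y) as [[]|]; simpl in *;
    repeat match goal with h : _ /\ _ |- _ => destruct h | h : _ \/ _ |- _ => destruct h end;
    repeat match goal with h : ?a = _ |- context[?a] => rewrite h end; simpl; auto; try contradiction.
  all: try (constructor; apply IHHT; simpl; auto; fail).
  - constructor; apply IHHT. unfold mi_env. specialize (H y).
    destruct (G y) as [[]|]; simpl in *; auto.
  - constructor. eapply nf_typ; eauto. unfold mc_env. destruct (G y) as [[]|]; simpl in *; auto; contradiction.
Qed.

Lemma Good_typ H M : typ H M -> Good M.
Proof.
  intros HT. exists (fun M => exists H, typ H M). split; [|eauto].
  clear. intros X [H [HT]]. induction HT; eauto.
  - constructor; auto. eapply nu_typ; eauto. simpl; auto.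
  - constructor; auto. eapply nu_typ; eauto. simpl; auto.
  - constructor; auto. eapply nu_typ; eauto. simpl; auto.
Qed.

Theorem mainTheorem20 (M N L : term) :
  is_term M -> red0s M N -> red0s M L ->
  exists P, red0s N P /\ red0s L P.
Proof.
  intros [G [_ HT]] HN HL. pose proof (Good_typ _ _ HT) as HG.
  destruct (conf _ _ _ HG (red0s_pars _ _ HG HN) (red0s_pars _ _ HG HL)) as [P [H1 H2]].
  exists P; split; apply pars_red0s; auto.
Qed.
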